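(* For every $n\ge1$ and every optimal $n$-town $S$, $$w(S)>\frac{h(S)}{2}-3\qquad\text{and}\qquad h(S)>\frac{w(S)}{2}-3.$$
   Context: An $n$-town is a set $S\subset\mathbb{Z}\times\mathbb{Z}$ of exactly $n$ distinct grid points; its cost is $c(S)=\frac12\sum_{s\in S}\sum_{t\in S}\|s-t\|_1$ (Manhattan distance), and it is optimal if its cost is minimum among all $n$-towns. For $i\in\mathbb{Z}$, the $i$-th column of $S$ is $C_i=\{(i,y)\in S\}$ and the $i$-th row is $R_i=\{(x,i)\in S\}$. The width of $S$ is $w(S)=\max_{i\in\mathbb{Z}}|R_i|$ and the height is $h(S)=\max_{i\in\mathbb{Z}}|C_i|$. *)

(* Defs.v *)
(* n-towns as duplicate-free lists of grid points in Z x Z. *)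
From Stdlib Require Import ZArith List.
Import ListNotations.
Open Scope Z_scope.

Definition point := (Z * Z)%type.

Definition l1 (s t : point) : Z := Z.abs (fst s - fst t) + Z.abs (snd s - snd t).

Definition is_town (n : nat) (S : list point) : Prop := NoDup S /\ length S = n.

Definition double_sum (S : list point) : Z :=
  fold_right Z.add 0 (map (fun s => fold_right Z.add 0 (map (fun t => l1 s t) S)) S).

(* c(S) = 1/2 * double sum (the double sum is always even, being symmetric with zero diagonal) *)
Definition cost (S : list point) : Z := double_sum S / 2.

Definition optimal (n : nat) (S : list point) : Prop :=
  is_town n S /\ forall T, is_town n T -> cost S <= cost T.

Definition col_size (S : list point) (i : Z) : nat :=
  length (filter (fun p => Z.eqb (fst p) i) S).
Definition row_size (S : list point) (i : Z) : nat :=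
  length (filter (fun p => Z.eqb (snd p) i) S).

(* w(S) = max_i |R_i|, h(S) = max_i |C_i|.  Only rows/columns meeting S can be
   nonempty, so the max over all i in Z equals the max over the rows/columns of points of S
   (with 0 for the empty town). *)
Definition width (S : list point) : nat :=
  fold_right Nat.max 0%nat (map (fun p => row_size S (snd p)) S).
Definition height (S : list point) : nat :=
  fold_right Nat.max 0%nat (map (fun p => col_size S (fst p)) S).

(* Main.v *)
Require Import Defs.
From Stdlib Require Import ZArith QArith List Lia Permutation Classical.
Import ListNotations.
Open Scope Z_scope.

Definition sumZ (l : list Z) : Z := fold_right Z.add 0 l.

Lemma sumZ_app l m : sumZ (l ++ m) = sumZ l + sumZ m.
Proof. induction l; simpl; [lia|]. unfold sumZ in *; simpl; rewrite IHl; lia. Qed.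

Lemma sumZ_map_add {A} (g h : A -> Z) l :
  sumZ (map (fun t => g t + h t) l) = sumZ (map g l) + sumZ (map h l).
Proof. induction l; simpl; [lia|]. unfold sumZ in *; simpl; rewrite IHl; lia. Qed.

Lemma sumZ_map_le {A} (g h : A -> Z) l :
  (forall t, In t l -> g t <= h t) -> sumZ (map g l) <= sumZ (map h l).
Proof.
  induction l; intros H; simpl; [lia|]. unfold sumZ in *; simpl.
  specialize (IHl (fun t Ht => H t (or_intror Ht))). specialize (H a (or_introl eq_refl)). lia.
Qed.

Lemma sumZ_map_ext {A} (g h : A -> Z) l :
  (forall t, In t l -> g t = h t) -> sumZ (map g l) = sumZ (map h l).
Proof.
  intros H; apply Z.le_antisymm; apply sumZ_map_le; intros t Ht; rewrite (H t Ht); lia.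
Qed.

Lemma sumZ_map_const {A} (c : Z) (l : list A) :
  sumZ (map (fun _ => c) l) = c * Z.of_nat (length l).
Proof. induction l; simpl; [lia|]. unfold sumZ in *; simpl; rewrite IHl; lia. Qed.

Lemma sumZ_map_scale {A} (c : Z) (g : A -> Z) l :
  sumZ (map (fun t => c * g t) l) = c * sumZ (map g l).
Proof. induction l; simpl; [lia|]. unfold sumZ in *; simpl; rewrite IHl; lia. Qed.

Lemma sumZ_filter {A} (P : A -> bool) g l :
  sumZ (map g l) = sumZ (map g (filter P l)) + sumZ (map g (filter (fun x => negb (P x)) l)).
Proof.
  induction l; simpl; [lia|]. destruct (P a); simpl; unfold sumZ in *; simpl; lia.
Qed.

Lemma sumZ_sub {A} (g : A -> Z) (l m : list A) :
  NoDup l -> incl l m -> (forall z, In z m -> 0 <= g z) ->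
  sumZ (map g l) <= sumZ (map g m).
Proof.
  revert m; induction l as [|z l IH]; intros m Hnd Hinc Hpos.
  - simpl. clear Hinc. induction m; simpl; [lia|]. unfold sumZ in *; simpl.
    specialize (IHm (fun t Ht => Hpos t (or_intror Ht))). specialize (Hpos a (or_introl eq_refl)). lia.
  - inversion Hnd; subst.
    destruct (in_split z m (Hinc z (or_introl eq_refl))) as [m1 [m2 Hm]]. subst m.
    assert (Hs1 : sumZ (map g l) <= sumZ (map g (m1 ++ m2))).
    { apply IH; auto.
      - intros y Hy. assert (Hy' := Hinc y (or_intror Hy)).
        apply in_app_or in Hy'. apply in_or_app. destruct Hy' as [Hy'|[Hy'|Hy']]; auto.
        subst; contradiction.
      - intros y Hy. apply Hpos. apply in_app_or in Hy; apply in_or_app; simpl; tauto. }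
    rewrite map_app in *. simpl. rewrite sumZ_app in *. unfold sumZ in *; simpl. lia.
Qed.

Definition fS (S : list point) (z : point) : Z := sumZ (map (fun t => l1 z t) S).
Definition FX (S : list point) (x : Z) : Z := sumZ (map (fun t => Z.abs (x - fst t)) S).
Definition GY (S : list point) (y : Z) : Z := sumZ (map (fun t => Z.abs (y - snd t)) S).

Lemma fS_split S x y : fS S (x,y) = FX S x + GY S y.
Proof. unfold fS, FX, GY, l1. simpl. apply sumZ_map_add. Qed.

Lemma l1_sym s t : l1 s t = l1 t s.
Proof. unfold l1; lia. Qed.

Lemma l1_self s : l1 s s = 0.
Proof. unfold l1; lia. Qed.

Definition DS2 (A B : list point) := sumZ (map (fun s => sumZ (map (fun t => l1 s t) B)) A).

Lemma DS_eq S : double_sum S = DS2 S S.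
Proof. reflexivity. Qed.

Lemma DS2_app_l A1 A2 B : DS2 (A1 ++ A2) B = DS2 A1 B + DS2 A2 B.
Proof. unfold DS2. rewrite map_app, sumZ_app. reflexivity. Qed.

Lemma DS2_app_r A B1 B2 : DS2 A (B1 ++ B2) = DS2 A B1 + DS2 A B2.
Proof. unfold DS2. rewrite <- sumZ_map_add. apply sumZ_map_ext. intros. rewrite map_app, sumZ_app; auto. Qed.

Lemma DS2_cons_l x A B : DS2 (x :: A) B = fS B x + DS2 A B.
Proof. reflexivity. Qed.

Lemma DS2_cons_r x A B : DS2 A (x :: B) = fS A x + DS2 A B.
Proof.
  unfold DS2, fS. simpl. rewrite sumZ_map_add. f_equal. apply sumZ_map_ext. intros; apply l1_sym.
Qed.

Lemma DS_mid l1' l2 x :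
  double_sum (l1' ++ x :: l2) = double_sum (l1' ++ l2) + 2 * fS (l1' ++ l2) x.
Proof.
  rewrite !DS_eq. change (x :: l2) with ([x] ++ l2).
  repeat (rewrite ?DS2_app_l, ?DS2_app_r).
  rewrite !DS2_cons_l, !DS2_cons_r.
  assert (E: forall B, DS2 [] B = 0) by reflexivity.
  assert (E2: forall A, DS2 A [] = 0) by (intros A; induction A; auto).
  rewrite !E, !E2. unfold fS. cbn -[Z.mul sumZ]. unfold sumZ at 4 5; cbn -[Z.mul]. rewrite l1_self. rewrite map_app, sumZ_app. unfold sumZ; lia.
Qed.
Lemma fS_mid L1 L2 p z : fS (L1 ++ p :: L2) z = fS (L1 ++ L2) z + l1 z p.
Proof. unfold fS. rewrite !map_app, !sumZ_app. simpl. unfold sumZ; simpl. lia. Qed.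

Lemma l1_pos p q : p <> q -> 1 <= l1 q p.
Proof.
  destruct p as [x y], q as [x' y']. unfold l1; simpl. intros H.
  destruct (Z.eq_dec x x'); destruct (Z.eq_dec y y'); subst; try lia. congruence.
Qed.

Lemma level n S p q : optimal n S -> In p S -> ~ In q S -> fS S p + l1 q p <= fS S q.
Proof.
  intros [[Hnd Hlen] Hopt] Hp Hq.
  destruct (in_split p S Hp) as [L1 [L2 HS]]. subst S.
  assert (HT : is_town n (L1 ++ q :: L2)).
  { split.
    - apply Permutation_NoDup with (q :: L1 ++ L2). apply Permutation_middle.
      constructor.
      + intro H. apply Hq. apply in_app_or in H. apply in_or_app. simpl. tauto.
      + eapply NoDup_remove_1; eauto.
    - rewrite length_app in *. simpl in *. lia. }
  specialize (Hopt _ HT). unfold cost in Hopt. rewrite !DS_mid in Hopt.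
  rewrite !fS_mid. rewrite l1_self.
  set (X := double_sum (L1 ++ L2)) in *.
  rewrite !(Z.mul_comm 2) in Hopt. rewrite !Z_div_plus_full in Hopt by lia.
  rewrite (l1_sym q p). lia.
Qed.

Lemma level_lt n S p q : optimal n S -> In p S -> ~ In q S -> fS S p < fS S q.
Proof.
  intros H Hp Hq. assert (p <> q) by (intro; subst; contradiction).
  pose proof (level n S p q H Hp Hq). pose proof (l1_pos p q H0). lia.
Qed.

Lemma level_xy n S x y x' y' : optimal n S -> In (x,y) S -> ~ In (x',y') S ->
  FX S x + GY S y < FX S x' + GY S y'.
Proof. intros. rewrite <- !fS_split. eapply level_lt; eauto. Qed.
Definition colL (S : list point) x := map snd (filter (fun p => Z.eqb (fst p) x) S).
Definition rowL (S : list point) y := map fst (filter (fun p => Z.eqb (snd p) y) S).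

Lemma colL_len S x : length (colL S x) = col_size S x.
Proof. unfold colL, col_size. apply length_map. Qed.
Lemma rowL_len S y : length (rowL S y) = row_size S y.
Proof. unfold rowL, row_size. apply length_map. Qed.

Lemma colL_In S x y : In y (colL S x) <-> In (x,y) S.
Proof.
  unfold colL. rewrite in_map_iff. split.
  - intros [[x' y'] [E H]]. apply filter_In in H. simpl in *. destruct H as [H H'].
    apply Z.eqb_eq in H'. subst. auto.
  - intros H. exists (x,y). split; auto. apply filter_In. simpl. split; auto. apply Z.eqb_refl.
Qed.
Lemma rowL_In S x y : In x (rowL S y) <-> In (x,y) S.
Proof.
  unfold rowL. rewrite in_map_iff. split.
  - intros [[x' y'] [E H]]. apply filter_In in H. simpl in *. destruct H as [H H'].
    apply Z.eqb_eq in H'. subst. auto.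
  - intros H. exists (x,y). split; auto. apply filter_In. simpl. split; auto. apply Z.eqb_refl.
Qed.

Lemma colL_NoDup S x : NoDup S -> NoDup (colL S x).
Proof.
  intros H. unfold colL. apply NoDup_map_NoDup_ForallPairs; [|apply NoDup_filter; auto].
  intros [a1 b1] [a2 b2] H1 H2 E. apply filter_In in H1. apply filter_In in H2.
  simpl in *. destruct H1 as [_ H1], H2 as [_ H2]. apply Z.eqb_eq in H1, H2. subst. auto.
Qed.
Lemma rowL_NoDup S y : NoDup S -> NoDup (rowL S y).
Proof.
  intros H. unfold rowL. apply NoDup_map_NoDup_ForallPairs; [|apply NoDup_filter; auto].
  intros [a1 b1] [a2 b2] H1 H2 E. apply filter_In in H1. apply filter_In in H2.
  simpl in *. destruct H1 as [_ H1], H2 as [_ H2]. apply Z.eqb_eq in H1, H2. subst. auto.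
Qed.

Lemma max_ge {A} (g : A -> nat) l z : In z l -> (g z <= fold_right Nat.max 0%nat (map g l))%nat.
Proof. induction l; simpl; [tauto|]. intros [H|H]; [subst; lia|]. specialize (IHl H); lia. Qed.

Lemma max_att {A} (g : A -> nat) l : l <> [] -> exists z, In z l /\ fold_right Nat.max 0%nat (map g l) = g z.
Proof.
  induction l as [|a l IH]; intros H; [congruence|]. simpl.
  destruct l as [|b l'].
  - exists a. simpl. split; auto. lia.
  - destruct IH as [z [Hz E]]; [congruence|]. rewrite E.
    destruct (Nat.le_ge_cases (g a) (g z)).
    + exists z. split; [right; auto|]. lia.
    + exists a. split; auto. lia.
Qed.

Lemma col_le_height S x : (col_size S x <= height S)%nat.
Proof.
  destruct (colL S x) as [|y l] eqn:E.
  - rewrite <- colL_len, E. simpl. lia.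
  - assert (Hy : In (x,y) S) by (apply colL_In; rewrite E; left; auto).
    unfold height. apply (max_ge (fun p => col_size S (fst p)) S (x,y) Hy).
Qed.
Lemma row_le_width S y : (row_size S y <= width S)%nat.
Proof.
  destruct (rowL S y) as [|x l] eqn:E.
  - rewrite <- rowL_len, E. simpl. lia.
  - assert (Hy : In (x,y) S) by (apply rowL_In; rewrite E; left; auto).
    unfold width. apply (max_ge (fun p => row_size S (snd p)) S (x,y) Hy).
Qed.

Lemma height_att S : S <> [] -> exists x y, In (x,y) S /\ col_size S x = height S.
Proof.
  intros H. destruct (max_att (fun p => col_size S (fst p)) S H) as [[x y] [Hz E]].
  exists x, y. split; auto.
Qed.

Definition rangeZ (lo : Z) (k : nat) : list Z := map (fun i => lo + Z.of_nat i) (seq 0 k).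

Lemma rangeZ_In lo k z : In z (rangeZ lo k) <-> lo <= z < lo + Z.of_nat k.
Proof.
  unfold rangeZ. rewrite in_map_iff. split.
  - intros [i [E H]]. apply in_seq in H. lia.
  - intros H. exists (Z.to_nat (z - lo)). split; [lia|]. apply in_seq. lia.
Qed.

Lemma rangeZ_NoDup lo k : NoDup (rangeZ lo k).
Proof.
  unfold rangeZ. apply NoDup_map_NoDup_ForallPairs; [|apply seq_NoDup].
  intros a b _ _ E. lia.
Qed.

Lemma rangeZ_len lo k : length (rangeZ lo k) = k.
Proof. unfold rangeZ. rewrite length_map, length_seq. auto. Qed.

Lemma count_bound (l : list Z) lo hi : l <> [] -> NoDup l -> (forall z, In z l -> lo <= z <= hi) ->
  Z.of_nat (length l) <= hi - lo + 1.
Proof.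
  intros Hne Hnd H. destruct l as [|z l']. { congruence. }
  assert (Hz := H z (or_introl eq_refl)).
  assert (Hinc : incl (z :: l') (rangeZ lo (Z.to_nat (hi - lo + 1)))).
  { intros y Hy. apply rangeZ_In. specialize (H y Hy). lia. }
  pose proof (NoDup_incl_length Hnd Hinc). rewrite rangeZ_len in H0. lia.
Qed.

Lemma range_in_list (L : list Z) lo k : (forall z, lo <= z < lo + Z.of_nat k -> In z L) ->
  (k <= length L)%nat.
Proof.
  intros H. rewrite <- (rangeZ_len lo k). apply NoDup_incl_length. apply rangeZ_NoDup.
  intros z Hz. apply H. apply rangeZ_In; auto.
Qed.

Lemma list_max (l : list Z) : l <> [] -> exists m, In m l /\ forall z, In z l -> z <= m.
Proof.
  induction l as [|a l IH]; intros H; [congruence|].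
  destruct l as [|b l']. { exists a. simpl. split; auto. intros z [E|[]]; lia. }
  destruct IH as [m [Hm Hm']]; [congruence|].
  destruct (Z.le_ge_cases a m).
  - exists m. split; [right; auto|]. intros z [E|Hz]; [lia|auto].
  - exists a. split; [left; auto|]. intros z [E|Hz]; [lia|]. specialize (Hm' z Hz); lia.
Qed.

Lemma list_min (l : list Z) : l <> [] -> exists m, In m l /\ forall z, In z l -> m <= z.
Proof.
  induction l as [|a l IH]; intros H; [congruence|].
  destruct l as [|b l']. { exists a. simpl. split; auto. intros z [E|[]]; lia. }
  destruct IH as [m [Hm Hm']]; [congruence|].
  destruct (Z.le_ge_cases a m).
  - exists a. split; [left; auto|]. intros z [E|Hz]; [lia|]. specialize (Hm' z Hz); lia.
  - exists m. split; [right; auto|]. intros z [E|Hz]; [lia|auto].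
Qed.

Lemma list_argmin (g : Z -> Z) (l : list Z) : l <> [] -> exists m, In m l /\ forall z, In z l -> g m <= g z.
Proof.
  induction l as [|a l IH]; intros H; [congruence|].
  destruct l as [|b l']. { exists a. simpl. split; auto. intros z [E|[]]; subst; lia. }
  destruct IH as [m [Hm Hm']]; [congruence|].
  destruct (Z.le_ge_cases (g a) (g m)).
  - exists a. split; [left; auto|]. intros z [E|Hz]; [subst; lia|]. specialize (Hm' z Hz); lia.
  - exists m. split; [right; auto|]. intros z [E|Hz]; [subst; lia|auto].
Qed.
Lemma abs_convex lo m hi c : lo <= m <= hi ->
  (hi - lo) * Z.abs (m - c) <= (hi - m) * Z.abs (lo - c) + (m - lo) * Z.abs (hi - c).
Proof.
  intros H.
  destruct (Z.le_gt_cases c lo); [|destruct (Z.le_gt_cases c m); [|destruct (Z.le_gt_cases c hi)]].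
  - rewrite !(Z.abs_eq (_ - c)) by lia. nia.
  - rewrite (Z.abs_neq (lo - c)) by lia. rewrite (Z.abs_eq (m - c)) by lia.
    rewrite (Z.abs_eq (hi - c)) by lia. nia.
  - rewrite (Z.abs_neq (lo - c)) by lia. rewrite (Z.abs_neq (m - c)) by lia.
    rewrite (Z.abs_eq (hi - c)) by lia. nia.
  - rewrite !(Z.abs_neq (_ - c)) by lia. nia.
Qed.

Lemma GY_convex S lo m hi : lo <= m <= hi ->
  (hi - lo) * GY S m <= (hi - m) * GY S lo + (m - lo) * GY S hi.
Proof.
  intros H. unfold GY. rewrite <- !sumZ_map_scale, <- sumZ_map_add.
  apply sumZ_map_le. intros t _. apply abs_convex; auto.
Qed.

Definition cntA (S : list point) b := sumZ (map (fun t => if b <? snd t then 1 else 0) S).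

Lemma GY_step S b : GY S (b + 1) = GY S b + Z.of_nat (length S) - 2 * cntA S b.
Proof.
  unfold GY, cntA.
  rewrite (sumZ_map_ext _ (fun t => Z.abs (b - snd t) + ((fun _ => 1) t + -2 * (if b <? snd t then 1 else 0)))).
  - rewrite !sumZ_map_add, sumZ_map_const, sumZ_map_scale. unfold point in *. lia.
  - intros t _. destruct (Z.ltb_spec b (snd t)); lia.
Qed.

Lemma sum_abs_fst S t : In t S -> Z.abs (fst t) <= sumZ (map (fun t : point => Z.abs (fst t)) S).
Proof.
  intros H. assert (E : Z.abs (fst t) = sumZ (map (fun t : point => Z.abs (fst t)) [t])) by (simpl; unfold sumZ; simpl; lia).
  rewrite E. apply sumZ_sub. constructor; auto. constructor. intros z [->|[]]; auto.
  intros; lia.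
Qed.

Lemma run_dir (S : list point) (a b s : Z) : In (a,b) S -> (s = 1 \/ s = -1) ->
  exists d, 1 <= d /\ ~ In (a + s*d, b) S /\ forall i, 0 <= i < d -> In (a + s*i, b) S.
Proof.
  intros Hab Hs.
  assert (K : forall k : nat, (forall i, 0 <= i <= Z.of_nat k -> In (a + s*i, b) S) \/
     exists d, 1 <= d /\ ~ In (a + s*d, b) S /\ forall i, 0 <= i < d -> In (a + s*i, b) S).
  { induction k as [|k [IH|IH]].
    - left. intros i Hi. replace (a + s*i) with a by nia. auto.
    - destruct (classic (In (a + s * Z.of_nat (Datatypes.S k), b) S)) as [Hin|Hout].
      + left. intros i Hi. destruct (Z.eq_dec i (Z.of_nat (Datatypes.S k))); [subst; auto|].
        apply IH. lia.
      + right. exists (Z.of_nat (Datatypes.S k)). split; [lia|]. split; auto.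
        intros i Hi. apply IH. lia.
    - right; auto. }
  set (B := sumZ (map (fun t : point => Z.abs (fst t)) S) + Z.abs a + 1).
  assert (HB0 : 0 <= sumZ (map (fun t : point => Z.abs (fst t)) S)).
  { assert (H0 : sumZ (map (fun _ : point => 0) S) <= sumZ (map (fun t : point => Z.abs (fst t)) S))
      by (apply sumZ_map_le; intros; lia).
    rewrite sumZ_map_const in H0. lia. }
  destruct (K (Z.to_nat B)) as [H|H]; auto.
  exfalso. specialize (H B). assert (Hi : In (a + s * B, b) S) by (apply H; lia).
  apply sum_abs_fst in Hi. simpl in Hi. fold B in Hi.
  destruct Hs; subst s; unfold B in *; lia.
Qed.

Lemma run_exists (S : list point) (a b : Z) : In (a,b) S ->
  exists e, ~ In (a + e, b) S /\ 2 * Z.abs e <= Z.of_nat (width S) + 1.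
Proof.
  intros Hab.
  destruct (run_dir S a b 1 Hab (or_introl eq_refl)) as [d [Hd [Hdo Hdi]]].
  destruct (run_dir S a b (-1) Hab (or_intror eq_refl)) as [d' [Hd' [Hdo' Hdi']]].
  assert (Hl : (Z.to_nat (d + d' - 1) <= length (rowL S b))%nat).
  { apply (range_in_list _ (a - d' + 1)). intros z Hz. apply rowL_In.
    destruct (Z.le_gt_cases a z).
    - replace z with (a + 1 * (z - a)) by lia. apply Hdi. lia.
    - replace z with (a + -1 * (a - z)) by lia. apply Hdi'. lia. }
  rewrite rowL_len in Hl. pose proof (row_le_width S b).
  destruct (Z.le_gt_cases d d').
  - exists d. replace d with (1 * d) by lia. split; auto. lia.
  - exists (-d'). replace (-d') with (-1 * d') by lia. split; auto. lia.
Qed.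
Lemma core_top n (S : list point) (a yT yB b : Z) :
  optimal n S -> (1 <= n)%nat ->
  col_size S a = height S ->
  In (a,yT) S -> (forall y, In (a,y) S -> y <= yT) ->
  In (a,yB) S -> (forall y, In (a,y) S -> yB <= y) ->
  yB <= b <= yT -> (forall y, yB <= y <= yT -> GY S b <= GY S y) ->
  b - yB <= yT - b ->
  Z.of_nat (height S) <= 2 * Z.of_nat (width S) + 3.
Proof.
  intros Hopt Hn Ha HT HTmax HB HBmin Hb Hbmin Hdir.
  assert (Hnd : NoDup S) by (apply Hopt).
  assert (Hlen : length S = n) by (apply Hopt).
  pose proof (level_xy n S) as Hlev.
  assert (Hh : Z.of_nat (height S) <= yT - yB + 1).
  { rewrite <- Ha, <- colL_len. apply count_bound.
    - intro E. assert (In yT (colL S a)) by (apply colL_In; auto). rewrite E in H; auto.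
    - apply colL_NoDup; auto.
    - intros z Hz. apply colL_In in Hz. split; auto. }
  assert (Claim1 : forall x y, In (x,y) S -> y <= yT).
  { intros x y Hxy. destruct (Z.le_gt_cases y yT) as [|Hgt]; auto. exfalso.
    assert (Hay : ~ In (a,y) S) by (intro H; specialize (HTmax y H); lia).
    pose proof (Hlev x y a y Hopt Hxy Hay) as H1.
    assert (Hinc : incl (y :: colL S a) (colL S x)).
    { intros y' [E|Hy']. { subst. apply colL_In; auto. }
      apply colL_In in Hy'. apply colL_In. destruct (classic (In (x,y') S)) as [|Hno]; auto.
      pose proof (Hlev a y' x y' Hopt Hy' Hno). lia. }
    assert (Hnd2 : NoDup (y :: colL S a)).
    { constructor; [|apply colL_NoDup; auto]. intro H. apply colL_In in H. specialize (HTmax y H). lia. }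
    pose proof (NoDup_incl_length Hnd2 Hinc). simpl in H. rewrite !colL_len in H.
    pose proof (col_le_height S x). lia. }
  assert (Hab : In (a,b) S).
  { destruct (classic (In (a,b) S)) as [|Hno]; auto.
    pose proof (Hlev a yT a b Hopt HT Hno). specialize (Hbmin yT). lia. }
  assert (RowMono : forall x y y', b <= y' <= y -> y <= yT -> In (x,y) S -> In (x,y') S).
  { intros x y y' H1 H2 Hxy.
    assert (HG : GY S y' <= GY S y).
    { destruct (Z.eq_dec y' b). { subst. apply Hbmin. lia. }
      pose proof (GY_convex S b y' y ltac:(lia)). pose proof (Hbmin y' ltac:(lia)). nia. }
    destruct (classic (In (x,y') S)) as [|Hno]; auto.
    pose proof (Hlev x y x y' Hopt Hxy Hno). lia. }
  destruct (run_exists S a b Hab) as [e [He Hew]].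
  set (J := yT - b).
  assert (HJ : J <= 2 * Z.abs e).
  { destruct (Z.eq_dec J 0) as [HJ0|HJ0]; [lia|].
    set (N := Z.of_nat (length S)).
    assert (HA : 2 * cntA S b <= N).
    { pose proof (GY_step S b). pose proof (Hbmin (b+1) ltac:(lia)). unfold N. lia. }
    set (P := sumZ (map (fun t : point => Z.max 0 (snd t - b)) S)).
    set (W := fun t : point => if b <? snd t then 2 * (snd t - b) - (J + 1) else 0).
    assert (HW : sumZ (map W S) <= 0).
    { rewrite (sumZ_filter (fun t => 0 <? W t)).
      set (U := filter (fun t => 0 <? W t) S).
      set (Rt := filter (fun t => negb (0 <? W t)) S).
      set (psi := fun t : point => (fst t, b + yT + 1 - snd t)).
      assert (HU : forall t, In t U -> In t S /\ b < snd t /\ J + 1 < 2 * (snd t - b) /\ snd t <= yT).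
      { intros [x y] Ht. unfold U in Ht. apply filter_In in Ht. destruct Ht as [Ht Hw].
        apply Z.ltb_lt in Hw. unfold W in Hw. cbn [fst snd] in *.
        pose proof (Claim1 x y Ht). destruct (Z.ltb_spec b y); [|lia]. repeat split; auto; lia. }
      assert (E1 : sumZ (map W U) = sumZ (map (fun t => - W t) (map psi U))).
      { rewrite map_map. apply sumZ_map_ext. intros [x y] Ht. destruct (HU _ Ht) as [_ [H1 [H2 H3]]].
        unfold W, psi. cbn [fst snd] in *. unfold J in *. destruct (Z.ltb_spec b y); destruct (Z.ltb_spec b (b + yT + 1 - y)); lia. }
      assert (E2 : sumZ (map (fun t => - W t) (map psi U)) <= sumZ (map (fun t => - W t) Rt)).
      { apply sumZ_sub.
        - apply NoDup_map_NoDup_ForallPairs.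
          + intros [x1 y1] [x2 y2] _ _ E. unfold psi in E. simpl in E. inversion E. f_equal; lia.
          + apply NoDup_filter; auto.
        - intros z Hz. apply in_map_iff in Hz. destruct Hz as [[x y] [Ez Ht]]. subst z.
          destruct (HU _ Ht) as [Hin [H1 [H2 H3]]]. cbn [fst snd] in *.
          unfold Rt. apply filter_In. unfold psi; cbn [fst snd]. split.
          + apply (RowMono x y); auto. unfold J in *. lia.
          + unfold W; cbn [fst snd]. destruct (Z.ltb_spec b (b + yT + 1 - y)); [|lia].
            apply Bool.negb_true_iff. apply Z.ltb_ge. unfold J in *. lia.
        - intros z Hz. unfold Rt in Hz. apply filter_In in Hz. destruct Hz as [_ Hz].
          apply Bool.negb_true_iff in Hz. apply Z.ltb_ge in Hz. lia. }
      assert (E3 : sumZ (map (fun t => - W t) Rt) = - sumZ (map W Rt)).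
      { rewrite (sumZ_map_ext _ (fun t => -1 * W t)) by (intros; lia). rewrite sumZ_map_scale. lia. }
      lia. }
    assert (HPW : 2 * P = sumZ (map W S) + (J + 1) * cntA S b).
    { unfold P, cntA. rewrite <- sumZ_map_scale, <- sumZ_map_scale, <- sumZ_map_add.
      apply sumZ_map_ext. intros t _. unfold W. destruct (Z.ltb_spec b (snd t)); lia. }
    assert (HGT : GY S yT = GY S b + N * J - 2 * P).
    { unfold GY, P, N.
      rewrite (sumZ_map_ext (fun t : point => Z.abs (yT - snd t))
                 (fun t => Z.abs (b - snd t) + ((fun _ => J) t + -2 * Z.max 0 (snd t - b)))).
      - rewrite !sumZ_map_add, sumZ_map_const, sumZ_map_scale. unfold point in *. lia.
      - intros [x y] Ht. cbn [fst snd]. pose proof (Claim1 x y Ht). unfold J. lia. }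
    assert (HFX : FX S (a + e) <= FX S a + N * Z.abs e).
    { unfold FX, N. rewrite Z.mul_comm, <- (sumZ_map_const (Z.abs e) S), <- sumZ_map_add.
      apply sumZ_map_le. intros; lia. }
    pose proof (Hlev a yT (a + e) b Hopt HT He).
    assert (HN : 1 <= N) by (unfold N; lia).
    assert (HJN : N * (J - 1 - 2 * Z.abs e) < 0) by nia.
    assert (J - 1 - 2 * Z.abs e < 0) by nia. lia. }
  unfold J in HJ. lia.
Qed.
Lemma DS_iso (phi : point -> point) T : (forall s t, l1 (phi s) (phi t) = l1 s t) ->
  double_sum (map phi T) = double_sum T.
Proof.
  intros H. rewrite !DS_eq. unfold DS2. rewrite map_map. apply sumZ_map_ext. intros s _.
  rewrite map_map. apply sumZ_map_ext. intros; apply H.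
Qed.

Lemma town_iso (phi : point -> point) n T : (forall z, phi (phi z) = z) ->
  is_town n T -> is_town n (map phi T).
Proof.
  intros Hinv [Hnd Hl]. split; [|rewrite length_map; auto].
  apply NoDup_map_NoDup_ForallPairs; auto. intros x y _ _ E.
  rewrite <- (Hinv x), <- (Hinv y), E. auto.
Qed.

Lemma opt_iso (phi : point -> point) n S : (forall z, phi (phi z) = z) ->
  (forall s t, l1 (phi s) (phi t) = l1 s t) -> optimal n S -> optimal n (map phi S).
Proof.
  intros Hinv Hl [HS Hopt]. split; [apply town_iso; auto|].
  intros T HT. unfold cost. rewrite DS_iso by auto.
  specialize (Hopt (map phi T) (town_iso phi n T Hinv HT)). unfold cost in Hopt.
  rewrite DS_iso in Hopt by auto. auto.
Qed.

Lemma len_filter_map {A B} (P : B -> bool) (f : A -> B) l :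
  length (filter P (map f l)) = length (filter (fun x => P (f x)) l).
Proof. induction l; simpl; auto. destruct (P (f a)); simpl; auto. Qed.

Definition rho (z : point) : point := (fst z, - snd z).
Definition tau (z : point) : point := (snd z, fst z).

Lemma rho_inv z : rho (rho z) = z.
Proof. destruct z; unfold rho; simpl; f_equal; lia. Qed.
Lemma tau_inv z : tau (tau z) = z.
Proof. destruct z; reflexivity. Qed.
Lemma rho_l1 s t : l1 (rho s) (rho t) = l1 s t.
Proof. unfold l1, rho; simpl; lia. Qed.
Lemma tau_l1 s t : l1 (tau s) (tau t) = l1 s t.
Proof. unfold l1, tau; simpl; lia. Qed.

Lemma rho_col S x : col_size (map rho S) x = col_size S x.
Proof. unfold col_size. rewrite len_filter_map. reflexivity. Qed.
Lemma rho_row S y : row_size (map rho S) y = row_size S (- y).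
Proof.
  unfold row_size. rewrite len_filter_map. f_equal. apply filter_ext. intros [a b]; unfold rho; simpl.
  destruct (Z.eqb_spec (-b) y); destruct (Z.eqb_spec b (-y)); auto; lia.
Qed.
Lemma rho_height S : height (map rho S) = height S.
Proof. unfold height. rewrite map_map. f_equal. apply map_ext. intros; rewrite rho_col; auto. Qed.
Lemma rho_width S : width (map rho S) = width S.
Proof. unfold width. rewrite map_map. f_equal. apply map_ext. intros [a b]. rewrite rho_row. unfold rho; simpl. f_equal; lia. Qed.
Lemma rho_In S x y : In (x,y) (map rho S) <-> In (x,-y) S.
Proof.
  rewrite in_map_iff. split.
  - intros [[a b] [E H]]. unfold rho in E; simpl in E. inversion E; subst. replace (- - b) with b by lia. auto.
  - intros H. exists (x,-y). split; auto. unfold rho; simpl. f_equal; lia.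
Qed.
Lemma rho_GY S y : GY (map rho S) y = GY S (- y).
Proof. unfold GY. rewrite map_map. apply sumZ_map_ext. intros [a b] _. unfold rho; simpl. lia. Qed.

Lemma tau_col S x : col_size (map tau S) x = row_size S x.
Proof. unfold col_size. rewrite len_filter_map. reflexivity. Qed.
Lemma tau_row S y : row_size (map tau S) y = col_size S y.
Proof. unfold row_size. rewrite len_filter_map. reflexivity. Qed.
Lemma tau_height S : height (map tau S) = width S.
Proof. unfold height, width. rewrite map_map. f_equal. apply map_ext. intros; rewrite tau_col; auto. Qed.
Lemma tau_width S : width (map tau S) = height S.
Proof. unfold height, width. rewrite map_map. f_equal. apply map_ext. intros; rewrite tau_row; auto. Qed.

Lemma core n (S : list point) : optimal n S -> (1 <= n)%nat ->
  Z.of_nat (height S) <= 2 * Z.of_nat (width S) + 3.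
Proof.
  intros Hopt Hn.
  assert (Hne : S <> []). { intro E. destruct Hopt as [[_ Hl'] _]. rewrite E in Hl'. simpl in Hl'. lia. }
  destruct (height_att S Hne) as [a [y0 [Hy0 Ha]]].
  assert (Hcne : colL S a <> []).
  { intro E. assert (In y0 (colL S a)) by (apply colL_In; auto). rewrite E in H; auto. }
  destruct (list_max _ Hcne) as [yT [HT HTmax]].
  destruct (list_min _ Hcne) as [yB [HB HBmin]].
  apply colL_In in HT. apply colL_In in HB.
  assert (HTm : forall y, In (a,y) S -> y <= yT) by (intros y H; apply HTmax, colL_In; auto).
  assert (HBm : forall y, In (a,y) S -> yB <= y) by (intros y H; apply HBmin, colL_In; auto).
  assert (HBT : yB <= yT) by (apply HTm; auto).
  assert (Hrne : rangeZ yB (Z.to_nat (yT - yB + 1)) <> []).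
  { intro E. assert (In yB (rangeZ yB (Z.to_nat (yT - yB + 1)))) by (apply rangeZ_In; lia).
    rewrite E in H; auto. }
  destruct (list_argmin (GY S) _ Hrne) as [b [Hb Hbmin]].
  apply rangeZ_In in Hb.
  assert (Hbm : forall y, yB <= y <= yT -> GY S b <= GY S y) by (intros y H; apply Hbmin, rangeZ_In; lia).
  destruct (Z.le_gt_cases (b - yB) (yT - b)).
  - apply (core_top n S a yT yB b); auto. lia.
  - rewrite <- rho_height, <- rho_width.
    apply (core_top n (map rho S) a (- yB) (- yT) (- b)).
    + apply opt_iso; auto using rho_inv, rho_l1.
    + auto.
    + rewrite rho_col, rho_height; auto.
    + apply rho_In. replace (- - yB) with yB by lia. auto.
    + intros y H1. apply rho_In in H1. apply HBm in H1. lia.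
    + apply rho_In. replace (- - yT) with yT by lia. auto.
    + intros y H1. apply rho_In in H1. apply HTm in H1. lia.
    + lia.
    + intros y Hy. rewrite !rho_GY. replace (- - b) with b by lia. apply Hbm. lia.
    + lia.
Qed.

Lemma q_ineq (h w : Z) : h <= 2 * w + 3 -> (inject_Z h / 2 - 3 < inject_Z w)%Q.
Proof.
  intros H. unfold Qlt, Qminus, Qdiv, inject_Z. simpl. lia.
Qed.

Theorem lemma4 (n : nat) (S : list point) :
  (1 <= n)%nat -> optimal n S ->
  (inject_Z (Z.of_nat (height S)) / 2 - 3 < inject_Z (Z.of_nat (width S)))%Q /\
  (inject_Z (Z.of_nat (width S)) / 2 - 3 < inject_Z (Z.of_nat (height S)))%Q.
Proof.
  intros Hn Hopt. split.
  - apply q_ineq. apply (core n S); auto.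
  - apply q_ineq. assert (H := core n (map tau S)).
    rewrite tau_height, tau_width in H. apply H; auto.
    apply opt_iso; auto using tau_inv, tau_l1.
Qed.
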